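(* Let $G$ be an infinite complete metrizable abelian torsion topological group. The following are equivalent: (i) $G$ is not NSS; (ii) $G$ contains a subgroup topologically isomorphic to an infinite product (with the Tychonoff product topology) of finite non-trivial (discrete) groups. In particular, if $G$ is not NSS, then $G$ contains an infinite compact zero-dimensional subgroup.
   Context: A topological group is NSS if it has a neighbourhood of the identity containing no non-trivial subgroup. A torsion group is one in which every element has finite order. *)

(* Defs.v *)
From HB Require Import structures.
From mathcomp Require Import all_boot all_order all_algebra all_fingroup.
From mathcomp Require Import all_classical all_reals all_analysis.
From mathcomp Require Import Rstruct.
From Stdlib Require Rdefinitions.
Notation R := Rdefinitions.R.

Set Implicit Arguments.
Unset Strict Implicit.
Unset Printing Implicit Defensive.

Import Order.TTheory GRing.Theory Num.Theory.
Local Open Scope classical_set_scope.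
Local Open Scope ring_scope.

Definition is_subgroup (G : zmodType) (S : set G) : Prop :=
  S 0 /\ (forall x y, S x -> S y -> S (x - y)).

Definition torsion_group (G : zmodType) : Prop :=
  forall x : G, exists n : nat, (0 < n)%N /\ x *+ n = 0.

Definition NSS (G : topologicalZmodType) : Prop :=
  exists U : set G, nbhs (0 : G) U /\
    forall S : set G, is_subgroup S -> S `<=` U -> S = [set 0].

Definition metrizable (T : topologicalType) : Prop :=
  exists d : T -> T -> R,
    (forall x y, 0 <= d x y) /\
    (forall x y, d x y = 0 <-> x = y) /\
    (forall x y, d x y = d y x) /\
    (forall x y z, d x z <= d x y + d y z) /\
    (forall (x : T) (A : set T),
        nbhs x A <-> exists e : R, 0 < e /\ forall y, d x y < e -> A y).

(* Completeness of a topological abelian group w.r.t. its (two-sided = left =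
   right) group uniformity: every proper filter which is Cauchy in the group
   sense converges. *)
Definition group_cauchy (G : topologicalZmodType) (F : set_system G) : Prop :=
  forall U : set G, nbhs (0 : G) U ->
    exists A, F A /\ forall x y, A x -> A y -> U (x - y).

Definition group_complete (G : topologicalZmodType) : Prop :=
  forall F : set_system G, ProperFilter F -> group_cauchy F ->
    exists x : G, F --> x.

(* Zero-dimensional subspace H of T (standard definition): every point of H
   has a neighbourhood base (in the subspace topology) of relatively clopen
   sets. *)
Definition zero_dim_subspace (T : topologicalType) (H : set T) : Prop :=
  forall x, H x -> forall U : set T, nbhs x U ->
    exists O C : set T, [/\ open O, closed C, H `&` O = H `&` C,
                           O x & H `&` O `<=` U].

Definition top_embedding (X Y : topologicalType) (phi : X -> Y) : Prop :=
  [/\ continuous phi, injective phi &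
      forall U : set X, open U ->
        exists V : set Y, open V /\ phi @` U = V `&` range phi].

(* G contains a subgroup topologically isomorphic to the Tychonoff product of
   the infinite family (F i)_{i in I} of finite non-trivial discrete groups:
   there is an injective continuous homomorphism from the product which is a
   homeomorphism onto its image (the image is then the subgroup). *)
Definition contains_infinite_product_of_finite_groups
    (G : topologicalZmodType) : Prop :=
  exists (I : Type) (F : I -> finGroupType),
    ~ finite_set [set: I] /\
    (forall i, (1 < #|F i|)%N) /\
    exists phi : prod_topology (fun i => discrete_topology (F i)) -> G,
      (forall x y : prod_topology (fun i => discrete_topology (F i)),
          phi (fun i => ((x i : F i) * (y i : F i))%g) = phi x + phi y) /\
      top_embedding phi.

(* Main.v *)
Require Import Defs.
From HB Require Import structures.
From mathcomp Require Import all_boot all_order all_algebra all_fingroup.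
From mathcomp Require Import all_classical all_reals all_analysis.
From mathcomp Require Import Rstruct lra.
Import Order.TTheory GRing.Theory Num.Theory.
Local Open Scope classical_set_scope.
Local Open Scope ring_scope.
Set Implicit Arguments.
Unset Strict Implicit.
Unset Printing Implicit Defensive.

Section TG.
Variable G : topologicalZmodType.

Lemma nbhs0_add (U : set G) : nbhs (0:G) U ->
  exists V : set G, nbhs (0:G) V /\ forall a b, V a -> V b -> U (a + b).
Proof.
move=> U0.
have := @add_continuous G (0, 0) U; rewrite /= addr0 => /(_ U0).
move=> [[A B] /= [A0 B0] AB].
exists (A `&` B); split; first exact: filterI.
by move=> a b [Aa _] [_ Bb]; exact: (AB (a, b)).
Qed.

Lemma nbhs_trans0 (x : G) (U : set G) : nbhs x U -> nbhs (0:G) [set y | U (x + y)].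
Proof.
move=> Ux.
have hc : continuous (fun y : G => x + y).
  move=> y; apply: (@continuous_comp _ _ _ (fun y => (x, y)) (fun p : G * G => p.1 + p.2)).
    by apply: cvg_pair; [exact: cvg_cst|exact: cvg_id].
  exact: add_continuous.
move: (hc 0 U) => /=; rewrite addr0 => /(_ Ux); apply.
Qed.

Lemma nbhs_sub (L : G) (W : set G) : nbhs (0:G) W -> nbhs L [set y | W (L - y)].
Proof.
move=> W0.
have hc : continuous (fun y : G => L - y).
  move=> y; apply: (@continuous_comp _ _ _ (fun y => (L, y)) (fun p : G * G => p.1 - p.2)).
    by apply: cvg_pair; [exact: cvg_cst|exact: cvg_id].
  exact: sub_continuous.
move: (hc L W) => /=; rewrite subrr => /(_ W0); apply.
Qed.

Lemma nbhsI (x : G) (A B : set G) : nbhs x A -> nbhs x B -> nbhs x (A `&` B).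
Proof. exact: filterI. Qed.

Lemma lim_approx (p : nat -> G) (L : G) (Q : nat -> Prop) (W : set G) :
  p @ \oo --> L -> (\forall N \near \oo, Q N) -> nbhs (0:G) W ->
  exists N, Q N /\ W (L - p N).
Proof.
move=> pL QN W0.
have WN := pL _ (nbhs_sub L W0).
have [N [QN1 WN1]] := filter_ex (filterI QN WN).
by exists N.
Qed.



Lemma cvg_add (f g : nat -> G) (a b : G) : f @ \oo --> a -> g @ \oo --> b ->
  (fun N => f N + g N) @ \oo --> a + b.
Proof.
move=> fa gb.
apply: continuous2_cvg => //; exact: (@add_continuous G (a, b)).
Qed.

Lemma mulrn_mod (y : G) (o a b : nat) : y *+ o = 0 ->
  y *+ ((a + b) %% o) = y *+ a + y *+ b.
Proof.
move=> yo; rewrite -mulrnDr {2}(divn_eq (a + b) o) mulrnDr mulnC mulrnA yo mul0rn add0r.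
by [].
Qed.

Lemma mulrn_neg (y : G) (o j : nat) : (0 < o)%N -> y *+ o = 0 ->
  - (y *+ j) = y *+ ((o.-1) * j).
Proof.
move=> o0 yo; apply/eqP; rewrite eq_sym -addr_eq0 -mulrnDr -mulSnr prednK //.
by rewrite mulrnA yo mul0rn.
Qed.

Section Metric.
Variable d : G -> G -> R.
Hypothesis d0 : forall x y, 0 <= d x y.
Hypothesis deq : forall x y, d x y = 0 <-> x = y.
Hypothesis dsym : forall x y, d x y = d y x.
Hypothesis dtri : forall x y z, d x z <= d x y + d y z.
Hypothesis dnbhs : forall (x : G) (A : set G),
        nbhs x A <-> exists e : R, 0 < e /\ forall y, d x y < e -> A y.

Lemma ball_nbhs (x : G) (e : R) : 0 < e -> nbhs x [set y | d x y < e].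
Proof. by move=> e0; apply/dnbhs; exists e. Qed.

Lemma dpos (x y : G) : x <> y -> 0 < d x y.
Proof.
move=> xy; rewrite lt_def d0 andbT; apply/eqP => /deq; exact: xy.
Qed.

Lemma metric_hausdorff : hausdorff_space G.
Proof.
move=> p q cl; apply: contrapT => pq.
have e0 := dpos pq.
have e20 : 0 < d p q / 2 by rewrite divr_gt0.
have [z [/= zp zq]] := cl _ _ (ball_nbhs p e20) (ball_nbhs q e20).
have := dtri p z q; rewrite (dsym z q); lra.
Qed.

Lemma nbhs_neq (z : G) : z <> 0 -> nbhs (0:G) [set y | y <> z].
Proof.
move=> z0; apply: filterS (ball_nbhs 0 (dpos (nesym z0))).
by move=> y /= dy yz; rewrite yz ltxx in dy.
Qed.

Lemma small_inv (e : R) : 0 < e -> exists n : nat, n.+1%:R^-1 < e.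
Proof.
move=> e0; exists (Num.Def.archi_bound e^-1).
have ie : 0 <= e^-1 by rewrite invr_ge0 ltW.
have h := @archi_boundP R e^-1 ie.
rewrite invf_plt ?posrE //.
by apply: (lt_trans h); rewrite ltr_nat.
Qed.

Lemma subgroup_mul (S : set G) (y : G) : is_subgroup S -> S y -> forall j, S (y *+ j).
Proof.
move=> hS Sy; case: hS => S0 SB; elim=> [|j IH]; first by rewrite mulr0n.
have Sn : S (- y) by rewrite -sub0r; exact: SB.
by rewrite mulrSr -[X in _ + X]opprK; apply: SB.
Qed.

Lemma nonNSS_elem (W : set G) : ~ NSS G -> nbhs (0:G) W ->
  exists y : G, y <> 0 /\ forall j, W (y *+ j).
Proof.
move=> hN W0.
have : ~ (forall S, is_subgroup S -> S `<=` W -> S = [set 0]).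
  by move=> h; apply: hN; exists W.
move=> /existsNP [S /not_implyP [Ssub /not_implyP [SW Sne]]].
have [y [Sy y0]] : exists y, S y /\ y <> 0.
  apply: contrapT => hne; apply: Sne; rewrite predeqE => z; split.
    by move=> Sz; apply: contrapT => z0; apply: hne; exists z.
  by move=> ->; case: Ssub.
by exists y; split => // j; apply: SW; exact: subgroup_mul.
Qed.

Lemma order_exists (y : G) : torsion_group G -> y <> 0 ->
  exists o : nat, [/\ (1 < o)%N, y *+ o = 0 & forall i, (0 < i < o)%N -> y *+ i <> 0].
Proof.
move=> tor y0.
have exP : exists n, (0 < n)%N && (y *+ n == 0).
  by have [n [n0 yn]] := tor y; exists n; rewrite n0 yn eqxx.
case: (ex_minnP exP) => o hP omin; case/andP: hP => o0 /eqP yo.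
exists o; split => //.
  rewrite ltn_neqAle o0 andbT; apply/eqP => o1; apply: y0.
  by rewrite -o1 mulr1n in yo.
move=> i /andP[i0 io] yi.
have := omin i; rewrite i0 yi eqxx => /(_ isT); by rewrite leqNgt io.
Qed.

Lemma avoid_nbhs (y : G) (o : nat) : (forall i, (0 < i < o)%N -> y *+ i <> 0) ->
  nbhs (0:G) [set z | forall i, (0 < i < o)%N -> y *+ i + z <> 0].
Proof.
move=> hy.
suff : forall k, nbhs (0:G) [set z | forall i, (0 < i < k)%N -> (i < o)%N -> y *+ i + z <> 0].
  move=> /(_ o); apply: filterS => z hz i /andP[i0 io]; apply: hz => //; by rewrite i0.
elim=> [|k IH].
  by apply: nearW => z i /andP[_].
have Ck : nbhs (0:G) [set z | (0 < k < o)%N -> y *+ k + z <> 0].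
  case: (boolP (0 < k < o)%N) => hk.
    have nz : - (y *+ k) <> 0 by move=> /eqP; rewrite oppr_eq0 => /eqP; exact: hy.
    apply: filterS (nbhs_neq nz) => z zn _ yz; apply: zn.
    by move/eqP: yz; rewrite addrC addr_eq0 => /eqP.
  by apply: nearW.
apply: filterS (nbhsI IH Ck) => z [h1 h2] i hi.
case/andP: hi => i0; rewrite ltnS leq_eqVlt.
case/orP => [/eqP ik io|ik io]; first by rewrite ik; apply: h2; rewrite -ik i0 io.
by apply: h1 => //; rewrite i0.
Qed.

Lemma step_lemma (n : nat) (W : set G) : ~ NSS G -> torsion_group G -> nbhs (0:G) W ->
  exists (g : G) (od : nat) (W' : set G),
  ([/\ (1 < od)%N, g *+ od = 0, (forall j, W (g *+ j)) & nbhs (0:G) W'] /\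
  [/\ (forall a b, W' a -> W' b -> W (a + b)),
   (forall z, W' z -> d 0 z < n.+2%:R^-1) &
   (forall a b c i, (0 < i < od)%N -> W' a -> W' b -> W' c -> g *+ i + (a + b + c) <> 0)]).
Proof.
move=> hN tor W0.
have [g [y0 Wy]] := nonNSS_elem hN W0.
have [od [hod1 yo hmin]] := order_exists tor y0.
have B0 := avoid_nbhs hmin.
have E0 : nbhs (0:G) [set z | d 0 z < n.+2%:R^-1].
  by apply: ball_nbhs; rewrite invr_gt0 ltr0n.
have U00 := nbhsI (nbhsI W0 B0) E0.
have [U1 [U10 U1U0]] := nbhs0_add U00.
have [W' [W'0 W'U1]] := nbhs0_add U10.
have W'1 : forall z, W' z -> U1 z.
  by move=> z Wz; rewrite -[z]addr0; apply: W'U1 => //; exact: nbhs_singleton.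
exists g, od, W'; split; first by split.
split.
- move=> a b Wa Wb; have := U1U0 _ _ (W'U1 _ _ Wa Wb) (nbhs_singleton U10).
  by rewrite addr0 => -[[]].
- move=> z Wz; have := U1U0 _ _ (W'1 _ Wz) (nbhs_singleton U10).
  by rewrite addr0 => -[_].
- move=> a b c i io Wa Wb Wc.
  have := U1U0 _ _ (W'U1 _ _ Wa Wb) (W'1 _ Wc) => -[[_ hB] _].
  exact: hB.
Qed.

Lemma construction : ~ NSS G -> torsion_group G ->
  exists (V : nat -> set G) (x : nat -> G) (od : nat -> nat),
  [/\ (forall n, nbhs (0:G) (V n)),
      (forall n a b, V n.+1 a -> V n.+1 b -> V n (a + b)),
      (forall n z, V n z -> d 0 z < n.+1%:R^-1) &
      (forall n, (1 < od n)%N /\ x n *+ od n = 0)] /\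
  (forall n j, V n (x n *+ j)) /\
  (forall n a b c i, (0 < i < od n)%N -> V n.+1 a -> V n.+1 b -> V n.+1 c ->
      x n *+ i + (a + b + c) <> 0).
Proof.
move=> hN tor.
have H : forall p : nat * set G, exists r : G * nat * set G, nbhs (0:G) p.2 ->
  ([/\ (1 < r.1.2)%N, r.1.1 *+ r.1.2 = 0, (forall j, p.2 (r.1.1 *+ j)) & nbhs (0:G) r.2] /\
  [/\ (forall a b, r.2 a -> r.2 b -> p.2 (a + b)),
   (forall z, r.2 z -> d 0 z < p.1.+2%:R^-1) &
   (forall a b c i, (0 < i < r.1.2)%N -> r.2 a -> r.2 b -> r.2 c ->
      r.1.1 *+ i + (a + b + c) <> 0)]).
  move=> [n W]; case: (pselect (nbhs (0:G) W)) => W0; last first.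
    by exists (0, 0%N, setT).
  have [g [k [W' HH]]] := step_lemma n hN tor W0.
  by exists (g, k, W').
have [f Hf] := choice H.
pose V := fix V (n : nat) : set G :=
  match n with 0%N => [set z | d 0 z < 1] | n'.+1 => (f (n', V n')).2 end.
have V0 : forall n, nbhs (0:G) (V n).
  elim=> [|n IH]; first by apply: ball_nbhs.
  by have [[_ _ _ h] _] := Hf (n, V n) IH.
exists V, (fun n => (f (n, V n)).1.1), (fun n => (f (n, V n)).1.2).
split; [split|split].
- exact: V0.
- by move=> n a b; have [_ [h _ _]] := Hf (n, V n) (V0 n); exact: h.
- case=> [|n] z /=; first by rewrite invr1.
  by have [_ [_ h _]] := Hf (n, V n) (V0 n); exact: h.
- by move=> n; have [[h1 h2 _ _] _] := Hf (n, V n) (V0 n).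
- by move=> n j; have [[_ _ h _] _] := Hf (n, V n) (V0 n); exact: h.
- by move=> n; have [_ [_ _ h]] := Hf (n, V n) (V0 n); exact: h.
Qed.

End Metric.
End TG.

Section Prod.
Variable G : topologicalZmodType.
Variable V : nat -> set G.
Variable x : nat -> G.
Variable od : nat -> nat.
Hypothesis HV0 : forall n, nbhs (0:G) (V n).
Hypothesis HVadd : forall n a b, V n.+1 a -> V n.+1 b -> V n (a + b).
Hypothesis Hod : forall n, (1 < od n)%N /\ x n *+ od n = 0.
Hypothesis HVx : forall n j, V n (x n *+ j).
Hypothesis HVbase : forall U, nbhs (0:G) U -> exists n, V n `<=` U.

Definition Fg (n : nat) : finGroupType := 'Z_(od n).
Definition Xp := prod_topology (fun n => discrete_topology (Fg n)).

Definition term (k : Xp) (n : nat) : G := x n *+ nat_of_ord (k n : 'Z_(od n)).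
Definition psum (k : Xp) (N : nat) : G := \sum_(0 <= i < N) term k i.

Lemma V_0 n : V n 0.
Proof. exact: nbhs_singleton. Qed.

Lemma VS n z : V n.+1 z -> V n z.
Proof. by move=> Hz; rewrite -[z]addr0; apply: HVadd => //; exact: V_0. Qed.

Lemma Vmono n k : (n <= k)%N -> forall z, V k z -> V n z.
Proof.
elim: k => [|k IH]; first by rewrite leqn0 => /eqP ->.
rewrite leq_eqVlt => /orP [/eqP -> //| nk] z /VS; exact: IH.
Qed.

Lemma tail_sum (s : nat -> G) : (forall i, V i (s i)) ->
  forall len a, V a (\sum_(a.+1 <= i < a.+1 + len) s i).
Proof.
move=> Hs; elim=> [|len IH] a.
  by rewrite addn0 big_geq // ; exact: V_0.
rewrite addnS big_nat_recl; last by rewrite leq_addr.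
have -> : \sum_(a.+1 <= i < a.+1 + len) s i.+1 = \sum_(a.+2 <= i < a.+2 + len) s i.
  by rewrite [RHS]big_add1 addSn.
by apply: HVadd => //; exact: IH.
Qed.

Lemma term_V k i : V i (term k i).
Proof. exact: HVx. Qed.

Lemma term_Vneg k i : V i (- term k i).
Proof.
have [ho1 xo] := Hod i.
rewrite /term (mulrn_neg _ (ltnW ho1) xo); exact: HVx.
Qed.

Lemma term_one (k : Xp) i : (k i : Fg i) = 1%g -> term k i = 0.
Proof. by rewrite /term => ->; rewrite mulr0n. Qed.

Lemma psum_split k N N' : (N <= N')%N ->
  psum k N' = psum k N + \sum_(N <= i < N') term k i.
Proof. by move=> h; rewrite /psum (big_cat_nat (leq0n N) h). Qed.

Lemma psum_zero k m N : (forall i, (i <= m)%N -> (k i : Fg i) = 1%g) -> (N <= m.+1)%N ->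
  psum k N = 0.
Proof.
move=> hk hN; rewrite /psum big_nat_cond big1 // => i /andP[/andP[_ hi] _].
by apply: term_one; apply: hk; rewrite -ltnS; exact: leq_trans hi hN.
Qed.

Lemma psum_small k m : (forall i, (i <= m)%N -> (k i : Fg i) = 1%g) ->
  forall N, V m (psum k N).
Proof.
move=> hk N; case: (leqP N m.+1) => hN.
  by rewrite (psum_zero hk hN); exact: V_0.
rewrite (psum_split k (ltnW hN)) (psum_zero hk (leqnn _)) add0r.
rewrite -(subnKC (ltnW hN)); exact: tail_sum (term_V k) _ _.
Qed.

Lemma psum_diff k n N N' : (n < N)%N -> (n < N')%N -> V n (psum k N - psum k N').
Proof.
move=> hN hN'; case: (leqP N N') => h.
  rewrite (psum_split k h) opprD addrA subrr add0r -sumrN.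
  have hN1 : N = (N.-1).+1 by rewrite prednK // (leq_ltn_trans _ hN).
  rewrite -(subnKC h) hN1; apply: (Vmono (n := n) (k := N.-1)); first by rewrite -ltnS -hN1.
  exact: tail_sum (term_Vneg k) _ _.
rewrite (psum_split k (ltnW h)) addrC addKr.
have hN1 : N' = (N'.-1).+1 by rewrite prednK // (leq_ltn_trans _ hN').
rewrite -(subnKC (ltnW h)) hN1; apply: (Vmono (n := n) (k := N'.-1)); first by rewrite -ltnS -hN1.
exact: tail_sum (term_V k) _ _.
Qed.

Lemma psum_cvg (hc : group_complete G) k : exists L : G, psum k @ \oo --> L.
Proof.
apply: hc => U U0; have [n Vn] := HVbase U0.
exists (psum k @` [set N | (n < N)%N]); split.
  by exists n.+1 => // N /= hN; exists N.
by move=> _ _ [N hN <-] [N' hN' <-]; apply: Vn; exact: psum_diff.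
Qed.

Hypothesis Havoid : forall n a b c i, (0 < i < od n)%N -> V n.+1 a -> V n.+1 b ->
  V n.+1 c -> x n *+ i + (a + b + c) <> 0.

Definition mulX (k k' : Xp) : Xp := fun i => ((k i : Fg i) * (k' i : Fg i))%g.
Definition invX (k : Xp) : Xp := fun i => ((k i : Fg i)^-1)%g.
Definition oneX : Xp := fun i => (1 : Fg i)%g.
Definition cyl (k : Xp) (m : nat) : set Xp := [set k' | forall n, (n <= m)%N -> k' n = k n].

Lemma psum_mul k k' : psum (mulX k k') = (fun N => psum k N + psum k' N).
Proof.
apply: funext => N; rewrite /psum -big_split; apply: eq_bigr => i _.
rewrite /term /mulX.
have [ho1 xo] := Hod i.
have xo' : x i *+ (Zp_trunc (od i)).+2 = 0 by rewrite Zp_cast.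
exact: (mulrn_mod _ _ xo').
Qed.

Lemma psum_zero' k N : (forall i, (i < N)%N -> (k i : Fg i) = 1%g) -> psum k N = 0.
Proof.
move=> hk; rewrite /psum big_nat_cond big1 // => i /andP[/andP[_ hi] _].
by apply: term_one; apply: hk.
Qed.

Variable phi : Xp -> G.
Hypothesis Hphi : forall k, psum k @ \oo --> phi k.
Hypothesis hG : hausdorff_space G.

Lemma phi_hom k k' : phi (mulX k k') = phi k + phi k'.
Proof.
have h1 := @Hphi (mulX k k'); rewrite psum_mul in h1.
have h2 := cvg_add (@Hphi k) (@Hphi k').
exact: (@cvg_unique _ hG _ _ _ _ h1 h2).
Qed.

Lemma phi_one : phi oneX = 0.
Proof.
have := phi_hom oneX oneX.
rewrite (_ : mulX oneX oneX = oneX); last first.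
  by apply: functional_extensionality_dep => i; rewrite /mulX /oneX mulg1.
by move=> h; apply: (addrI (phi oneX)); rewrite addr0 -h.
Qed.

Lemma phi_inv k : phi (invX k) = - phi k.
Proof.
apply/eqP; rewrite -addr_eq0 -phi_hom.
rewrite (_ : mulX (invX k) k = oneX) ?phi_one //.
by apply: functional_extensionality_dep => i; rewrite /mulX /invX /oneX mulVg.
Qed.

Lemma coord_nbhs (k : Xp) n : nbhs k [set k' : Xp | k' n = k n].
Proof.
have := @proj_continuous nat (fun n => discrete_topology (Fg n)) n k [set k n].
apply; apply: open_nbhs_nbhs; split => //; exact: discrete_open.
Qed.

Lemma cyl_nbhs k m : nbhs k (cyl k m).
Proof.
elim: m => [|m IH].
  by apply: filterS (coord_nbhs k 0) => k' h n; rewrite leqn0 => /eqP ->.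
apply: filterS (filterI IH (coord_nbhs k m.+1)) => k' [h1 h2] n.
by rewrite leq_eqVlt => /orP [/eqP ->|]; [|exact: h1].
Qed.

Lemma phi_cyl k U : nbhs (phi k) U -> exists m, cyl k m `<=` phi @^-1` U.
Proof.
move=> Uk.
have W0 := nbhs_trans0 Uk.
have [V' [V'0 V'W]] := nbhs0_add W0.
have [m Vm] := HVbase V'0.
exists m => k' hk'.
pose D := mulX k' (invX k).
have eD : mulX D k = k'.
  by apply: functional_extensionality_dep => i; rewrite /D /mulX /invX mulgKV.
have D1 : forall i, (i <= m)%N -> (D i : Fg i) = 1%g.
  by move=> i im; rewrite /D /mulX /invX hk' // mulgV.
have [N [_ WN]] := @lim_approx G (psum D) (phi D) (fun _ => True) V' (@Hphi D)
  (filterT : \oo [set: nat]) V'0.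
have e : phi D = psum D N + (phi D - psum D N) by rewrite addrC subrK.
have WD : [set y | U (phi k + y)] (phi D).
  rewrite e; apply: V'W => //; apply: Vm; exact: psum_small.
by rewrite /= -eD phi_hom addrC.
Qed.

Lemma phi_cont : continuous phi.
Proof.
move=> k U /= Uk; have [m hm] := phi_cyl Uk.
exact: filterS hm (cyl_nbhs k m).
Qed.

Lemma phi_inj : injective phi.
Proof.
move=> k k' e.
pose D := mulX k (invX k').
have D0 : phi D = 0 by rewrite phi_hom phi_inv e subrr.
suff D1 : forall i, (D i : Fg i) = 1%g.
  apply: functional_extensionality_dep => i; apply/eqP; rewrite eq_mulgV1.
  by apply/eqP; exact: D1.
apply: contrapT => /existsNP [i0 hi0].
have exP : exists n, (D n : Fg n) != 1%g by exists i0; apply/eqP.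
case: (ex_minnP exP) => m hm hmin.
have Dlow : forall i, (i < m)%N -> (D i : Fg i) = 1%g.
  move=> i im; apply/eqP; apply: contraTT im => hi; rewrite -leqNgt; exact: hmin.
have [ho1 xo] := Hod m.
have Qev : \forall N \near \oo, exists a b, V m.+1 a /\ V m.+1 b /\
    psum D N = term D m + (a + b).
  exists m.+2 => // N /= hN.
  exists (term D m.+1), (\sum_(m.+2 <= i < N) term D i); split; first exact: term_V.
  split.
    by rewrite -(subnKC hN); exact: tail_sum (term_V D) _ _.
  rewrite (psum_split D (leq_trans (leqnSn m) (ltnW hN))) (psum_zero' Dlow) add0r.
  by rewrite big_ltn ?(ltnW hN) // big_ltn.
have [N [[a [b [Va [Vb eN]]]] Wc]] := lim_approx (@Hphi D) Qev (HV0 m.+1).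
have ltm : (nat_of_ord (D m : 'Z_(od m)) < od m)%N.
  by rewrite -[X in (_ < X)%N](Zp_cast ho1) ltn_ord.
have posm : (0 < nat_of_ord (D m : 'Z_(od m)))%N.
  rewrite lt0n; apply: contraNneq hm => h0; apply/eqP; apply: val_inj; exact: h0.
apply: (Havoid (a := a) (b := b) (c := phi D - psum D N) (i := nat_of_ord (D m : 'Z_(od m)))
  _ Va Vb Wc); first by rewrite posm ltm.
by rewrite eN D0 sub0r /term addrA subrr.
Qed.

Lemma Xp_compact : compact [set: Xp].
Proof.
have -> : [set: Xp] = [set f : Xp | forall i, [set: discrete_topology (Fg i)] (f i)].
  by rewrite predeqE.
have h := (@tychonoff nat (fun i => discrete_topology (Fg i)) (fun i => setT) (fun i => @finite_compact (discrete_topology (Fg i)) setT (@finite_finset (Fg i) setT))).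
exact h.
Qed.

Lemma phi_closed (A : set Xp) : closed A -> closed (phi @` A).
Proof.
move=> cA; apply: (compact_closed hG); apply: continuous_compact.
  exact: continuous_subspaceT phi_cont.
exact: subclosed_compact cA Xp_compact (subsetT A).
Qed.

Lemma phi_open_image (U : set Xp) : open U ->
  exists W : set G, open W /\ phi @` U = W `&` range phi.
Proof.
move=> oU; exists (~` (phi @` (~` U))); split.
  by apply: closed_openC; apply: phi_closed; exact: open_closedC.
rewrite eqEsubset; split.
  move=> _ [k Uk <-]; split; last by exists k.
  by move=> [k' nUk' /phi_inj ek]; apply: nUk'; rewrite ek.
move=> y [nimg [k _ ek]]; exists k => //.
by apply: contrapT => nUk; apply: nimg; exists k.
Qed.

Lemma cyl_open k m : open (cyl k m).
Proof.
rewrite openE => k' hk'.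
apply: filterS (cyl_nbhs k' m) => k'' h n nm.
by rewrite h // hk'.
Qed.

Lemma cyl_closed k m : closed (cyl k m).
Proof.
rewrite -[cyl k m]setCK; apply: open_closedC; rewrite openE => k' hk'.
apply: filterS (cyl_nbhs k' m) => k'' h hk''; apply: hk' => n nm.
by rewrite -h // hk''.
Qed.

Definition eX (n : nat) : Xp := fun i => if i == n then (inZp 1 : 'Z_(od i)) else (1%g : Fg i).

Lemma eX_inj : injective eX.
Proof.
move=> n n' e; apply/eqP; apply: contraT => nn'.
have := congr1 (fun f : Xp => nat_of_ord (f n : 'Z_(od n))) e.
rewrite /eX eqxx (negbTE nn') /= modn_small //.
Qed.

Lemma package :
  [/\ (forall k k', phi (mulX k k') = phi k + phi k'), top_embedding phi,
      is_subgroup (range phi), ~ finite_set (range phi) &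
      compact (range phi) /\ zero_dim_subspace (range phi)].
Proof.
split.
- exact: phi_hom.
- split; [exact: phi_cont|exact: phi_inj|exact: phi_open_image].
- split; first by exists oneX => //; exact: phi_one.
  move=> _ _ [k _ <-] [k' _ <-]; exists (mulX k (invX k')) => //.
  by rewrite phi_hom phi_inv.
- move=> fin.
  have inj : {in (phi \o eX) @^-1` range phi &, injective (phi \o eX)}.
    by move=> n n' _ _ /= /phi_inj /eX_inj.
  have := finite_preimage inj fin.
  rewrite (_ : (phi \o eX) @^-1` range phi = setT); first exact: infinite_nat.
  by rewrite predeqE => n; split => // _; exists (eX n).
split.
  apply: continuous_compact; first exact: continuous_subspaceT phi_cont.
  exact: Xp_compact.
move=> _ [k _ <-] U Uk.
have [m hm] := phi_cyl Uk.
have [Q1 [hQ1 eO]] := phi_open_image (@cyl_open k m).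
exists Q1, (phi @` cyl k m); split.
- exact: hQ1.
- exact: phi_closed (@cyl_closed k m).
- rewrite setIC -eO; rewrite eqEsubset; split => y.
    by move=> [k' hk' <-]; split; [exists k'|exists k'].
  by move=> [_ h].
- have : (Q1 `&` range phi) (phi k) by rewrite -eO; exists k.
  by case.
- by rewrite setIC -eO => _ [k' hk' <-]; exact: hm.
Qed.

End Prod.


Lemma product_notNSS (G : topologicalZmodType) :
  contains_infinite_product_of_finite_groups G -> ~ NSS G.
Proof.
move=> [I [F [infI [cardF [phi [hom [cont inj _]]]]]]] [U [U0 hU]].
pose X := prod_topology (fun i => discrete_topology (F i)).
pose one : X := fun i => (1%g : F i).
have phi1 : phi one = 0.
  have := hom one one.
  rewrite (_ : (fun i => ((one i : F i) * (one i : F i))%g) = one); last first.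
    by apply: functional_extensionality_dep => i; rewrite /one mulg1.
  by move=> h; apply: (addrI (phi one)); rewrite addr0 -h.
have phiinv : forall k : X, phi (fun i => ((k i : F i)^-1)%g) = - phi k.
  move=> k; apply/eqP; rewrite -addr_eq0 -hom.
  rewrite (_ : (fun i => _) = one) ?phi1 //.
  by apply: functional_extensionality_dep => i; rewrite /one mulVg.
have N1 : nbhs one (phi @^-1` U) by apply: cont; rewrite phi1.
pose cy (J : set I) : set X := [set k : X | forall j, J j -> (k j : F j) = 1%g].
pose Fl := filter_from [set J : set I | finite_set J] cy.
have FlF : Filter Fl.
  apply: filter_from_filter; first by exists set0 => //; exact: finite_set0.
  move=> J J' fJ fJ'; exists (J `|` J'); first by rewrite /= finite_setU.
  by move=> k h; split => j hj; apply: h; [left|right].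
have Flone : Fl --> one.
  apply/cvg_sup => i A [B [[W oW <-] Wone BA]].
  exists [set i]; first exact: finite_set1.
  by move=> k hk; apply: BA => /=; rewrite hk.
have [J finJ sub] := Flone _ N1.
have [i0 ni0] : exists i, ~ J i.
  apply: contrapT => h; apply: infI; apply: sub_finite_set finJ => i _.
  by apply: contrapT => ni; apply: h; exists i.
have [g ng] : exists g : F i0, g != 1%g.
  have /card_gt1P [a [b [_ _ ab]]] := cardF i0.
  case: (eqVneq a 1%g) => [a1|a1]; last by exists a.
  by exists b; rewrite -a1 eq_sym.
pose e : X := fun j => match pselect (i0 = j) with
  | left h => eq_rect i0 (fun j => F j) g j h | right _ => (1%g : F j) end.
have ecy : cy J e.
  move=> j Jj; rewrite /e; case: pselect => [h|//].
  by exfalso; apply: ni0; rewrite h.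
have ei0 : (e i0 : F i0) = g.
  rewrite /e; case: pselect => [h|//].
  by rewrite (Prop_irrelevance h erefl).
pose S := phi @` cy J.
have Ssub : is_subgroup S.
  split; first by exists one => //; move=> j _.
  move=> _ _ [k hk <-] [k' hk' <-].
  exists (fun i => ((k i : F i) * ((k' i : F i)^-1))%g).
    by move=> j Jj; rewrite hk // hk' // invg1 mulg1.
  by rewrite hom phiinv.
have := hU S Ssub; rewrite /S => /(_ _) eS.
have SU : S `<=` U by move=> _ [k hk <-]; exact: sub.
have := eS SU; rewrite /S => eS'.
have : (phi @` cy J) (phi e) by exists e.
rewrite eS' /= -phi1 => /inj ee.
by move: ng; rewrite -ei0 ee /one eqxx.
Qed.

Unset Implicit Arguments.

Theorem theorem8p5 (G : topologicalZmodType) :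
  ~ finite_set [set: G] -> metrizable G -> group_complete G -> torsion_group G ->
  (~ NSS G <-> contains_infinite_product_of_finite_groups G) /\
  (~ NSS G -> exists H : set G,
      [/\ is_subgroup H, ~ finite_set H, compact H & zero_dim_subspace H]).
Proof.
move=> _ [d [d0 [deq [dsym [dtri dnbhs]]]]] hc tor.
have hG := metric_hausdorff d0 deq dsym dtri dnbhs.
have main : ~ NSS G -> exists (od : nat -> nat) (phi : Xp od -> G),
  (forall n, (1 < od n)%N) /\
  [/\ (forall k k', phi (mulX k k') = phi k + phi k'), top_embedding phi,
      is_subgroup (range phi), ~ finite_set (range phi) &
      compact (range phi) /\ zero_dim_subspace (range phi)].
  move=> hN.
  have [V [x [od [[HV0 HVadd Hball Hod] [HVx Havoid]]]]] := construction d0 deq dnbhs hN tor.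
  have HVbase : forall U, nbhs (0:G) U -> exists n, V n `<=` U.
    move=> U /dnbhs [e [e0 he]]; have [n hn] := small_inv e0.
    by exists n => z /Hball hz; apply: he; exact: lt_trans hz hn.
  have [phi Hphi] := choice (psum_cvg HV0 HVadd Hod HVx HVbase hc).
  exists od, phi; split; first by move=> n; case: (Hod n).
  exact: (package HV0 HVadd Hod HVx HVbase Havoid Hphi hG).
split; last first.
  move=> hN; have [od [phi [_ [_ _ h1 h2 [h3 h4]]]]] := main hN.
  by exists (range phi); split.
split; last exact: product_notNSS.
move=> hN; have [od [phi [hod [hom emb _ _ _]]]] := main hN.
exists nat, (Fg od); split; first exact: infinite_nat.
split; first by move=> i; rewrite /Fg card_ord.
by exists phi; split.
Qed.
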